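(* Let $\mathcal{B}$ be a real Banach space whose dual space $\mathcal{B}^*$ is smooth, let $\nu_j\in\mathcal{B}^*$, $j\in\mathbb{N}_m$, be linearly independent and let $\mathbf{y}\in\mathbb{R}^m$. Then $\hat f\in\mathcal{B}$ is a solution of the minimum norm interpolation problem with data $\mathbf{y}$ if and only if $\hat f\in\mathcal{M}_{\mathbf{y}}$ and there exist $c_j\in\mathbb{R}$, $j\in\mathbb{N}_m$, such that $$\hat f=\rho\,\mathcal{G}^*\Big(\sum_{j\in\mathbb{N}_m}c_j\nu_j\Big),\qquad \rho:=\Big\|\sum_{j\in\mathbb{N}_m}c_j\nu_j\Big\|_{\mathcal{B}^*},$$ where $\hat f$ is identified with its canonical image in $\mathcal{B}^{**}$.
   Context: $\mathcal{B}$ is a real Banach space with dual $\mathcal{B}^*$ and pairing $\langle\nu,f\rangle_{\mathcal{B}}:=\nu(f)$; $\mathbb{N}_m:=\{1,\dots,m\}$; $\mathcal{L}(f):=[\langle\nu_j,f\rangle_{\mathcal{B}}:j\in\mathbb{N}_m]$, $\mathcal{M}_{\mathbf{y}}:=\{f\in\mathcal{B}:\mathcal{L}(f)=\mathbf{y}\}$; a solution of the minimum norm interpolation problem with data $\mathbf{y}$ is an $\hat f\in\mathcal{M}_{\mathbf{y}}$ with $\|\hat f\|_{\mathcal{B}}=\inf\{\|f\|_{\mathcal{B}}:f\in\mathcal{M}_{\mathbf{y}}\}$. A normed space $X$ is smooth if its norm is Gâteaux differentiable at every $x\neq0$, i.e. $\lim_{t\to0}(\|x+th\|-\|x\|)/t$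 exists for all $h$; the Gâteaux derivative is the functional in $X^*$ given by this limit. $\mathcal{G}^*(\nu)\in\mathcal{B}^{**}$ denotes the Gâteaux derivative of $\|\cdot\|_{\mathcal{B}^*}$ at $\nu\neq0$, and $\mathcal{G}^*(0):=0$. *)

(* Defs.v *)
From HB Require Import structures.
From mathcomp Require Import all_boot all_order all_algebra.
From mathcomp Require Import all_classical all_reals all_analysis.
Set Implicit Arguments. Unset Strict Implicit. Unset Printing Implicit Defensive.
Import Order.TTheory GRing.Theory Num.Theory.
Import numFieldNormedType.Exports.
Local Open Scope classical_set_scope.
Local Open Scope ring_scope.

Definition is_dual (R : realType) (V : normedModType R) (nu : V -> R) : Prop :=
  (forall (a : R) (f g : V), nu (a *: f + g) = a * nu f + nu g) /\ continuous nu.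

Definition dnorm (R : realType) (V : normedModType R) (nu : V -> R) : R :=
  sup [set `|nu f| | f in [set f : V | `|f| <= 1]].

Definition dquot (R : realType) (V : normedModType R) (nu h : V -> R) (t : R) : R :=
  (dnorm (fun f => nu f + t * h f) - dnorm nu) / t.

Definition dual_smooth (R : realType) (V : normedModType R) : Prop :=
  forall nu : V -> R, is_dual nu -> nu <> (fun=> 0) ->
  forall h : V -> R, is_dual h -> cvg (dquot nu h @ (0 : R)^').

(* Gateaux derivative of the dual norm at nu, as an element of the bidual
   (a functional on the dual); its value at nu = 0 is 0 by convention *)
Definition gateaux_dual (R : realType) (V : normedModType R) (nu : V -> R)
  : (V -> R) -> R :=
  fun h => if pselect (nu = fun=> 0) then 0 else lim (dquot nu h @ (0 : R)^').

Definition lincomb (R : realType) (V : normedModType R) (m : nat)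
  (c : 'I_m -> R) (nu : 'I_m -> V -> R) : V -> R :=
  fun f => \sum_(j < m) c j * nu j f.

Definition lin_indep (R : realType) (V : normedModType R) (m : nat)
  (nu : 'I_m -> V -> R) : Prop :=
  forall c : 'I_m -> R, lincomb c nu = (fun=> 0) -> forall j, c j = 0.

Definition interp_set (R : realType) (V : normedModType R) (m : nat)
  (nu : 'I_m -> V -> R) (y : 'I_m -> R) : set V :=
  [set f | forall j, nu j f = y j].

Definition is_min_norm_interp (R : realType) (V : normedModType R) (m : nat)
  (nu : 'I_m -> V -> R) (y : 'I_m -> R) (fhat : V) : Prop :=
  interp_set nu y fhat /\
  `|fhat| = inf [set `|f| | f in interp_set nu y].

(* Main.v *)
Require Import Defs.
From HB Require Import structures.
From mathcomp Require Import all_boot all_order all_algebra.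
From mathcomp Require Import all_classical all_reals all_analysis.
From mathcomp Require Import ring lra.
Import Order.TTheory GRing.Theory Num.Theory.
Import numFieldNormedType.Exports.
Local Open Scope classical_set_scope.
Local Open Scope ring_scope.

Section HBsec.
Variables (R : realType) (V : lmodType R).

Definition sublin (q : V -> R) :=
  (forall x y, q (x + y) <= q x + q y) /\ (forall a x, 0 < a -> q (a *: x) = a * q x).

Lemma sublin0 q : sublin q -> q 0 = 0.
Proof.
move=> [_ hZ]; have := hZ 2 0 (ltr0Sn _ 1); rewrite scaler0 => h; lra.
Qed.

Lemma sublinN q x : sublin q -> - q (- x) <= q x.
Proof.
move=> hq; have := hq.1 x (- x); rewrite subrr sublin0 //; lra.
Qed.

Section InfC.
Variables (q : V -> R) (C : set (V * R)).
Hypotheses (hq : sublin q) (C0 : C (0, 0))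
  (CD : forall z1 s1 z2 s2, C (z1, s1) -> C (z2, s2) -> C (z1 + z2, s1 + s2))
  (CZ : forall a z s, 0 < a -> C (z, s) -> C (a *: z, a * s))
  (Cle : forall z s, C (z, s) -> s <= q z).

Definition infC (x : V) : R := inf [set q (x + p.1) - p.2 | p in C].

Lemma infC_le x {z s} : C (z, s) -> infC x <= q (x + z) - s.
Proof.
move=> Cp; apply: ge_inf; last by exists (z, s).
exists (- q (- x)) => _ [[z' s'] Cp' <-] /=.
have := Cle _ _ Cp'; have := hq.1 (x + z') (- x).
rewrite addrC addKr; lra.
Qed.

Lemma infC_ge x b : (forall z s, C (z, s) -> b <= q (x + z) - s) -> b <= infC x.
Proof.
move=> hb; apply: lb_le_inf; first by exists (q (x + 0) - 0); exists (0, 0).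
by move=> _ [[z s] Cp <-]; exact: hb.
Qed.

Lemma infC_sublin : sublin infC.
Proof.
split.
- move=> x y.
  suff : infC (x + y) - infC y <= infC x by lra.
  apply: infC_ge => z1 s1 C1.
  suff : infC (x + y) - (q (x + z1) - s1) <= infC y by lra.
  apply: infC_ge => z2 s2 C2.
  have h1 := infC_le (x + y) (CD _ _ _ _ C1 C2).
  have h2 := hq.1 (x + z1) (y + z2).
  have e : x + y + (z1 + z2) = x + z1 + (y + z2).
    by rewrite addrACA.
  rewrite e in h1; lra.
- move=> a x a0; apply/eqP; rewrite eq_le; apply/andP; split.
  + rewrite -ler_pdivrMl //; apply: infC_ge => z s Cp.
    rewrite ler_pdivrMl //.
    have := infC_le (a *: x) (CZ _ _ _ a0 Cp).
    by rewrite -scalerDr hq.2 //; lra.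
  + apply: infC_ge => z s Cp.
    have ai : 0 < a^-1 by rewrite invr_gt0.
    have := infC_le x (CZ _ _ _ ai Cp).
    have -> : x + a^-1 *: z = a^-1 *: (a *: x + z).
      by rewrite scalerDr scalerA mulVf ?scale1r // gt_eqF.
    rewrite hq.2 // => h.
    have := ler_wpM2l (ltW a0) h.
    rewrite mulrBr mulrA mulrA divff ?gt_eqF // !mul1r //.
Qed.

Lemma infC_le_q x : infC x <= q x.
Proof. by have := infC_le x C0; rewrite addr0 subr0. Qed.

Lemma infC_neg {z s} : C (z, s) -> infC (- z) <= - s.
Proof. by move=> Cp; have := infC_le (- z) Cp; rewrite addNr sublin0 // sub0r. Qed.

End InfC.


Definition ray (p : V -> R) (y : V) : set (V * R) :=
  [set zs | exists2 t, 0 <= t & zs = (t *: y, t * p y)].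

Lemma sublin_pos p x t : sublin p -> 0 <= t -> p (t *: x) = t * p x.
Proof.
move=> hp; rewrite le_eqVlt => /orP[/eqP <-|t0]; last exact: hp.2.
by rewrite scale0r mul0r sublin0.
Qed.

Lemma infC_ray p y : sublin p ->
  [/\ sublin (infC p (ray p y)), (forall x, infC p (ray p y) x <= p x)
    & infC p (ray p y) (- y) <= - p y].
Proof.
move=> hp.
have C0 : ray p y (0, 0) by exists 0; rewrite ?scale0r ?mul0r.
have CD : forall z1 s1 z2 s2, ray p y (z1, s1) -> ray p y (z2, s2) ->
    ray p y (z1 + z2, s1 + s2).
  move=> z1 s1 z2 s2 [t1 t10 [-> ->]] [t2 t20 [-> ->]].
  by exists (t1 + t2); rewrite ?addr_ge0 // scalerDl mulrDl.
have CZ : forall a z s, 0 < a -> ray p y (z, s) -> ray p y (a *: z, a * s).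
  move=> a z s a0 [t t0 [-> ->]]; exists (a * t); last by rewrite scalerA mulrA.
  by rewrite mulr_ge0 // ltW.
have Cle : forall z s, ray p y (z, s) -> s <= p z.
  by move=> z s [t t0 [-> ->]]; rewrite sublin_pos.
split.
- exact: infC_sublin.
- by move=> x; apply: infC_le_q.
- by apply: infC_neg => //; exists 1; rewrite ?scale1r ?mul1r.
Qed.

Definition linf (mu : V -> R) := forall a f g, mu (a *: f + g) = a * mu f + mu g.

Lemma sublin_linear q : sublin q -> (forall y, q (- y) <= - q y) -> linf q.
Proof.
move=> hq hN.
have qN : forall y, q (- y) = - q y.
  move=> y; apply/eqP; rewrite eq_le hN /=; have := sublinN q y hq; lra.
have qD : forall x y, q (x + y) = q x + q y.
  move=> x y; apply/eqP; rewrite eq_le hq.1 /=.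
  have := hq.1 (x + y) (- y); rewrite addrK qN; lra.
move=> a f g; rewrite qD; congr (_ + _).
have [a0|a0] := leP 0 a; first by rewrite sublin_pos.
have -> : a *: f = - ((- a) *: f) by rewrite scaleNr opprK.
by rewrite qN sublin_pos ?oppr_ge0 ?ltW //; lra.
Qed.
End HBsec.

Arguments infC {R V}. Arguments ray {R V}. Arguments sublin {R V}. Arguments linf {R V}. Arguments infC_ray {R V}. Arguments sublinN {R V}. Arguments sublin_linear {R V}. Arguments sublin0 {R V}. Arguments sublin_pos {R V}.
Section HB2.
Variables (R : realType) (V : lmodType R).

Lemma hahn_banach (p : V -> R) (x0 : V) : sublin p ->
  exists mu : V -> R, [/\ linf mu, (forall x, mu x <= p x) & mu x0 = p x0].
Proof.
move=> hp.
have [hq0 q0p q0N] := infC_ray p x0 hp.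
set q0 := infC p (ray p x0) in hq0 q0p q0N.
pose S (q : V -> R) := sublin q /\ forall x, q x <= q0 x.
pose T := {q : V -> R | S q}.
pose Rl (a b : T) : bool := `[< forall x, sval b x <= sval a x >].
have t0 : T by exists q0; split.
have [t premax] : exists t, premaximal Rl t.
  apply: (ZL_preorder t0).
  - by move=> a; apply/asboolP => x.
  - move=> a b c /asboolP hab /asboolP hbc; apply/asboolP => x.
    exact: le_trans (hbc x) (hab x).
  move=> A Atot.
  have [[a Aa]|nA] := pselect (exists a, A a); last first.
    by exists t0 => s As; exfalso; apply: nA; exists s.
  pose E x := [set sval q x | q in A].
  have Elb : forall x, has_lbound (E x).
    move=> x; exists (- q0 (- x)) => _ [q _ <-].
    have [hq hq0'] := svalP q.
    have := sublinN _ x hq; have := hq0' (- x); lra.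
  have Ene : forall x, E x !=set0 by move=> x; exists (sval a x); exists a.
  pose r x := inf (E x).
  have r_le : forall q x, A q -> r x <= sval q x.
    by move=> q x Aq; apply: ge_inf => //; exists q.
  have r_ge : forall x b, (forall q, A q -> b <= sval q x) -> b <= r x.
    by move=> x b hb; apply: lb_le_inf => // _ [q Aq <-]; exact: hb.
  have hr : sublin r.
    split.
    - move=> x y.
      suff : r (x + y) - r y <= r x by lra.
      apply: (r_ge) => q1 A1.
      suff : r (x + y) - sval q1 x <= r y by lra.
      apply: (r_ge) => q2 A2.
      have [/asboolP h12|/asboolP h21] := Atot _ _ A1 A2.
      + have := r_le _ (x + y) A2; have := (svalP q2).1.1 x y; have := h12 x.
        lra.
      + have := r_le _ (x + y) A1; have := (svalP q1).1.1 x y; have := h21 y.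
        lra.
    - move=> c x c0; apply/eqP; rewrite eq_le; apply/andP; split.
      + rewrite -ler_pdivrMl //; apply: (r_ge) => q Aq.
        rewrite ler_pdivrMl // -(svalP q).1.2 //; exact: r_le.
      + apply: (r_ge) => q Aq; rewrite (svalP q).1.2 // ler_pM2l //; exact: r_le.
  have Sr : S r by split => // x; apply: le_trans (r_le _ x Aa) ((svalP a).2 x).
  exists (exist _ r Sr) => s As; apply/asboolP => x /=; exact: r_le.
have [hq hqq0] := svalP t.
set q := sval t in hq hqq0.
have lq : linf q.
  apply: sublin_linear => // y.
  have [hry ryq ryN] := infC_ray q y hq.
  set ry := infC q (ray q y) in hry ryq ryN.
  have Sry : S ry by split => // x; exact: le_trans (ryq x) (hqq0 x).
  have := premax (exist _ ry Sry); rewrite /Rl /= => /(_ (asboolT ryq)).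
  move=> /asboolP /(_ (- y)) h; exact: le_trans h ryN.
exists q; split => //.
- by move=> x; apply: le_trans (hqq0 x) (q0p x).
- apply/eqP; rewrite eq_le; apply/andP; split.
    exact: le_trans (hqq0 x0) (q0p x0).
  have : q (- x0) <= - p x0 := le_trans (hqq0 _) q0N.
  have -> : q (- x0) = - q x0.
    by have := lq (-1) x0 0; rewrite scaleN1r addr0 mulN1r sublin0 // addr0.
  lra.
Qed.
End HB2.
Arguments linf {R V}.
Section P3.
Variables (R : realType) (V : normedModType R).

Definition bl (nu : V -> R) := @linf R V nu /\ exists M, forall f, `|nu f| <= M * `|f|.

Lemma linf0 (nu : V -> R) : linf nu -> nu 0 = 0.
Proof. by move=> h; have := h 1 0 0; rewrite scale1r addr0 mul1r; lra. Qed.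

Lemma linfZ (nu : V -> R) a f : linf nu -> nu (a *: f) = a * nu f.
Proof. by move=> h; have := h a f 0; rewrite addr0 linf0 // addr0. Qed.

Lemma linfD (nu : V -> R) f g : linf nu -> nu (f + g) = nu f + nu g.
Proof. by move=> h; have := h 1 f g; rewrite scale1r mul1r. Qed.

Lemma linfB (nu : V -> R) f g : linf nu -> nu (f - g) = nu f - nu g.
Proof. by move=> h; rewrite linfD // -scaleN1r linfZ //; lra. Qed.

Lemma bl_dual (nu : V -> R) : bl nu -> is_dual nu.
Proof.
move=> [hl [M hM]]; split => // x.
have M1 : 0 < `|M| + 1 by rewrite ltr_wpDl.
apply/(@cvgrPdist_lt _ _ _ (nbhs x)) => e e0; near=> z.
rewrite -linfB //; apply: le_lt_trans (hM _) _.
apply: le_lt_trans (ler_wpM2r (normr_ge0 _) (ler_norm M)) _.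
apply: le_lt_trans (ler_wpM2r (normr_ge0 _) (ler_wpDr ler01 (lexx `|M|))) _.
rewrite -ltr_pdivlMl //.
by near: z; apply: cvgr_dist_lt => //; rewrite mulr_gt0 // invr_gt0.
Unshelve. all: by end_near. Qed.

Lemma dual_bl (nu : V -> R) : is_dual nu -> bl nu.
Proof.
move=> [hl hc]; split => //.
have h0 := hc 0.
have := cvgr_dist_lt _ _ h0 _ ltr01.
move=> h1; have := (nbhs_norm0P (P := fun z => `|nu 0 - nu z| < 1)).1 (h1 _); move=> [_/posnumP[e] efM].
exists (2 / e%:num) => f.
have [->|f0] := eqVneq f 0; first by rewrite linf0 // !normr0 mulr0.
have nf : 0 < `|f| by rewrite normr_gt0.
pose u := (e%:num / (2 * `|f|)) *: f.
have hu : `|u| < e%:num.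
  rewrite /u normrZ ger0_norm ?divr_ge0 ?mulr_ge0 //.
  have -> : e%:num / (2 * `|f|) * `|f| = e%:num / 2.
    by field; rewrite ?gt_eqF.
  have e0 : 0 < e%:num by []. lra.
have h : `|nu u| < 1 by have := efM u hu; rewrite /= linf0 // sub0r normrN.
have k0 : 0 < e%:num / (2 * `|f|) by rewrite divr_gt0 ?mulr_gt0.
rewrite /u linfZ // normrM gtr0_norm // in h.
rewrite -(ler_pM2l k0) (le_trans (ltW h)) //.
have -> : e%:num / (2 * `|f|) * (2 / e%:num * `|f|) = 1.
  by field; rewrite ?gt_eqF.
by [].
Qed.
End P3.
Arguments linf {R V}. Arguments sublin {R V}.
Arguments bl {R V}. Arguments linf0 {R V}. Arguments linfZ {R V}.
Arguments linfD {R V}. Arguments linfB {R V}. Arguments bl_dual {R V}. Arguments dual_bl {R V}.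
Section P4.
Variables (R : realType) (V : normedModType R).

Lemma dnorm_hs {nu : V -> R} : bl nu -> has_sup [set `|nu f| | f in [set f : V | `|f| <= 1]].
Proof.
move=> [hl [M hM]].
  split; first by exists `|nu 0|; exists 0; rewrite //= normr0.
  exists (`|M|) => _ [g /= g1 <-]; apply: le_trans (hM g) _.
  apply: le_trans (ler_wpM2r (normr_ge0 _) (ler_norm M)) _.
  by rewrite -{2}(mulr1 `|M|) ler_wpM2l.
Qed.

Lemma dnorm_ub {nu : V -> R} : bl nu -> forall f, `|nu f| <= dnorm nu * `|f|.
Proof.
move=> hb f; have hs := dnorm_hs hb; case: hb => [hl [M hM]].
have [->|f0] := eqVneq f 0; first by rewrite linf0 // !normr0 mulr0.
have nf : 0 < `|f| by rewrite normr_gt0.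
have : `|nu (`|f|^-1 *: f)| <= dnorm nu.
  apply: sup_upper_bound => //; exists (`|f|^-1 *: f) => //=.
  by rewrite normrZ normfV normr_id mulVf // gt_eqF.
rewrite linfZ // normrM normfV normr_id -(ler_pM2l nf) mulrA divff ?gt_eqF //.
by rewrite mul1r mulrC.
Qed.

Lemma dnorm_le (nu : V -> R) M : 0 <= M -> (forall f, `|nu f| <= M * `|f|) ->
  dnorm nu <= M.
Proof.
move=> M0 hM; apply: ge_sup; first by exists `|nu 0|; exists 0; rewrite //= normr0.
move=> _ [g /= g1 <-]; apply: le_trans (hM g) _.
by rewrite -{2}(mulr1 M) ler_wpM2l.
Qed.

Lemma dnorm_ge0 (nu : V -> R) : bl nu -> 0 <= dnorm nu.
Proof.
move=> h; apply: le_trans (normr_ge0 (nu 0)) _.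
by apply: sup_upper_bound; [exact: dnorm_hs | exists 0; rewrite //= normr0].
Qed.

Lemma bl_comb {nu mu : V -> R} (a b : R) : bl nu -> bl mu -> bl (fun f => a * nu f + b * mu f).
Proof.
move=> [hn [M hM]] [hm [N hN]]; split.
  by move=> c f g; rewrite hn hm; ring.
exists (`|a| * `|M| + `|b| * `|N|) => f.
apply: le_trans (ler_normD _ _) _; rewrite !normrM mulrDl.
apply: lerD; rewrite -mulrA ler_wpM2l //.
  by apply: le_trans (hM f) _; rewrite ler_wpM2r // ler_norm.
by apply: le_trans (hN f) _; rewrite ler_wpM2r // ler_norm.
Qed.

Lemma bl_scale {nu : V -> R} (a : R) : bl nu -> bl (fun f => a * nu f).
Proof.
move=> h; have := bl_comb a 0 h h.
by congr bl; apply: funext => f; rewrite mul0r addr0.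
Qed.

Lemma dnorm_scale (nu : V -> R) (a : R) : bl nu -> dnorm (fun f => a * nu f) = `|a| * dnorm nu.
Proof.
move=> h; apply/eqP; rewrite eq_le; apply/andP; split.
  apply: dnorm_le; first by rewrite mulr_ge0 ?dnorm_ge0.
  by move=> f; rewrite normrM -mulrA ler_wpM2l // dnorm_ub.
have [->|a0] := eqVneq a 0; first by rewrite normr0 mul0r dnorm_ge0 //; apply: bl_scale.
have na : 0 < `|a| by rewrite normr_gt0.
rewrite -ler_pdivlMl //; apply: dnorm_le.
  by rewrite mulr_ge0 ?invr_ge0 ?dnorm_ge0 ?ltW //; apply: bl_scale.
move=> f; rewrite -mulrA ler_pdivlMl //.
by have := dnorm_ub (bl_scale a h) f; rewrite normrM.
Qed.

Lemma dnorm_lip (nu mu : V -> R) (t : R) : bl nu -> bl mu ->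
  `|dnorm (fun f => nu f + t * mu f) - dnorm nu| <= `|t| * dnorm mu.
Proof.
move=> hn hm.
have h1 : bl (fun f => nu f + t * mu f).
  by have := bl_comb 1 t hn hm; congr bl; apply: funext => f; rewrite mul1r.
have tm0 : 0 <= `|t| * dnorm mu by rewrite mulr_ge0 ?dnorm_ge0.
rewrite ler_norml; apply/andP; split.
- suff : dnorm nu <= dnorm (fun f => nu f + t * mu f) + `|t| * dnorm mu by lra.
  apply: dnorm_le; first by rewrite addr_ge0 ?dnorm_ge0.
  move=> f.
  have -> : nu f = (nu f + t * mu f) - t * mu f by ring.
  apply: le_trans (ler_normB _ _) _; rewrite mulrDl lerD ?dnorm_ub //.
  by rewrite normrM -mulrA ler_wpM2l ?dnorm_ub.
- suff : dnorm (fun f => nu f + t * mu f) <= dnorm nu + `|t| * dnorm mu by lra.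
  apply: dnorm_le; first by rewrite addr_ge0 ?dnorm_ge0.
  move=> f; apply: le_trans (ler_normD _ _) _; rewrite mulrDl lerD ?dnorm_ub //.
  by rewrite normrM -mulrA ler_wpM2l ?dnorm_ub.
Qed.

Lemma norming (x : V) : exists mu : V -> R,
  [/\ bl mu, (forall f, `|mu f| <= `|f|) & mu x = `|x|].
Proof.
have hp : sublin (fun f : V => `|f|).
  split; first by move=> ? ?; apply: ler_normD.
  by move=> a f a0; rewrite normrZ gtr0_norm.
have [mu [hl hle hx]] := @hahn_banach R V _ x hp.
have hab : forall f, `|mu f| <= `|f|.
  move=> f; rewrite ler_norml hle andbT.
  have := hle (- f); rewrite normrN -scaleN1r linfZ //; lra.
exists mu; split => //; split => //; exists 1 => f; rewrite mul1r; exact: hab.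
Qed.

Lemma bl_zero (x : V) : (forall mu : V -> R, bl mu -> mu x = 0) -> x = 0.
Proof.
move=> h; have [mu [hb _ hx]] := norming x.
by apply/normr0_eq0; rewrite -hx h.
Qed.

End P4.
Arguments linf {R V}. Arguments sublin {R V}.
Arguments bl {R V}. Arguments linf0 {R V}. Arguments linfZ {R V}.
Arguments linfD {R V}. Arguments linfB {R V}. Arguments bl_dual {R V}. Arguments dual_bl {R V}.
Arguments dnorm_ub {R V}. Arguments dnorm_le {R V}. Arguments dnorm_ge0 {R V}.
Arguments bl_comb {R V}. Arguments bl_scale {R V}. Arguments dnorm_scale {R V}.
Arguments dnorm_lip {R V}. Arguments norming {R V}. Arguments bl_zero {R V}.

Section P5.
Variable R : realType.

Lemma near0' (P : R -> Prop) : (\forall t \near (0:R)^', P t) ->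
  exists2 d : R, 0 < d & forall t, t != 0 -> `|t| < d -> P t.
Proof.
move=> /nbhs_norm0P [d d0 hd]; exists d => // t t0 td.
exact: hd.
Qed.

Lemma cvg0'_pick {g : R -> R} {L e : R} : g @ (0:R)^' --> L -> 0 < e ->
  exists2 d : R, 0 < d & forall t, t != 0 -> `|t| < d -> `|L - g t| < e.
Proof. by move=> h e0; apply: near0'; apply: (cvgr_dist_lt _ _ h). Qed.

Lemma lim_bound {g : R -> R} {L M : R} : g @ (0:R)^' --> L ->
  (forall t, t != 0 -> `|g t| <= M) -> `|L| <= M.
Proof.
move=> h hM; apply/ler_addgt0Pr => e e0.
have [d d0 hd] := cvg0'_pick h e0.
have t0 : d / 2 != 0 by rewrite gt_eqF // divr_gt0.
have td : `|d / 2| < d by rewrite gtr0_norm ?divr_gt0 //; lra.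
have := hd _ t0 td; have := hM _ t0.
have := ler_normD (L - g (d / 2)) (g (d / 2)); rewrite subrK; lra.
Qed.

Lemma lim_sides {g : R -> R} {L a : R} : g @ (0:R)^' --> L ->
  (forall t, 0 < t -> a <= g t) -> (forall t, t < 0 -> g t <= a) -> L = a.
Proof.
move=> h hp hn; apply/eqP; rewrite eq_le; apply/andP; split.
- apply/ler_addgt0Pr => e e0.
  have [d d0 hd] := cvg0'_pick h e0.
  have t0 : - (d / 2) != 0 by rewrite oppr_eq0 gt_eqF // divr_gt0.
  have td : `|- (d / 2)| < d by rewrite normrN gtr0_norm ?divr_gt0 //; lra.
  have := hd _ t0 td; have := hn (- (d / 2)).
  rewrite oppr_lt0 divr_gt0 // => /(_ isT).
  move: (g _) => x h1 /ltr_normlP [? ?]; lra.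
- apply/ler_addgt0Pr => e e0.
  have [d d0 hd] := cvg0'_pick h e0.
  have t0 : d / 2 != 0 by rewrite gt_eqF // divr_gt0.
  have td : `|d / 2| < d by rewrite gtr0_norm ?divr_gt0 //; lra.
  have := hd _ t0 td; have := hp (d / 2).
  rewrite divr_gt0 // => /(_ isT).
  move: (g _) => x h1 /ltr_normlP [? ?]; lra.
Qed.

Variable V : normedModType R.

Lemma dquot_bound (nu mu : V -> R) t : bl nu -> bl mu -> t != 0 ->
  `|dquot nu mu t| <= dnorm mu.
Proof.
move=> hn hm t0; rewrite /dquot normrM normfV ler_pdivrMr ?normr_gt0 // mulrC.
exact: dnorm_lip.
Qed.

Lemma gateaux_bound (nu mu : V -> R) : bl nu -> bl mu ->
  (nu <> (fun=> 0) -> cvg (dquot nu mu @ (0 : R)^')) ->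
  `|gateaux_dual nu mu| <= dnorm mu.
Proof.
move=> hn hm hc; rewrite /gateaux_dual; destruct (pselect (nu = fun=> 0)) as [e0|n0] => /=.
  by rewrite normr0 dnorm_ge0.
rewrite /=; apply: (lim_bound (hc n0)).
by move=> t t0; apply: dquot_bound.
Qed.

Lemma gateaux_self (nu : V -> R) : bl nu -> gateaux_dual nu nu = dnorm nu.
Proof.
move=> hn; rewrite /gateaux_dual; destruct (pselect (nu = fun=> 0)) as [->|n0] => /=.
  apply/esym/eqP; rewrite eq_le dnorm_ge0; last first.
    by split; [move=> *; rewrite mulr0 addr0 | exists 0 => f; rewrite normr0 mul0r].
  rewrite andbT dnorm_le // => f; rewrite normr0 mul0r //.
have h1 : \forall t \near (0:R), `|t| < 1.
  by apply/nbhs_norm0P; exists 1; [exact: ltr01 | move=> t /=].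
have h2 := nbhs_dnbhs h1.
have hq : \forall t \near (0:R)^', dquot nu nu t = dnorm nu.
  have h3 := nbhs_dnbhs_neq (0:R).
  move: h2 h3; apply: filterS2 => t ht t0.
  rewrite /dquot.
  have -> : (fun f => nu f + t * nu f) = (fun f => (1 + t) * nu f).
    by apply: funext => f; ring.
  rewrite dnorm_scale // ger0_norm; last by move: ht => /ltr_normlP [? ?]; lra.
  by field.
by apply: lim_near_cst => //.
Qed.


Lemma gateaux_attain (nu mu : V -> R) (x : V) : bl nu -> bl mu ->
  nu <> (fun=> 0) -> cvg (dquot nu mu @ (0 : R)^') -> 0 < `|x| ->
  nu x = dnorm nu * `|x| -> gateaux_dual nu mu = mu x / `|x|.
Proof.
move=> hn hm n0 hc x0 hx; rewrite /gateaux_dual.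
destruct (pselect (nu = fun=> 0)) as [e0|n0'] => /=; first by case: n0.
have key : forall t, t * (mu x / `|x|) <=
    dnorm (fun f => nu f + t * mu f) - dnorm nu.
  move=> t.
  have hb : bl (fun f => nu f + t * mu f).
    by have := bl_comb _ _ 1 t hn hm; congr bl; apply: funext => f; rewrite mul1r.
  have := dnorm_ub _ hb x.
  move=> /(le_trans (ler_norm _)) h; rewrite -(ler_pM2r x0) mulrBl.
  have -> : t * (mu x / `|x|) * `|x| = t * mu x by field; rewrite gt_eqF.
  rewrite hx in h; lra.
apply: (lim_sides hc).
- by move=> t t0; rewrite /dquot ler_pdivlMr // mulrC.
- by move=> t t0; rewrite /dquot ler_ndivrMr // mulrC.
Qed.
End P5.
Arguments linf {R V}. Arguments sublin {R V}.
Arguments bl {R V}. Arguments linf0 {R V}. Arguments linfZ {R V}.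
Arguments linfD {R V}. Arguments linfB {R V}. Arguments bl_dual {R V}. Arguments dual_bl {R V}.
Arguments dnorm_ub {R V}. Arguments dnorm_le {R V}. Arguments dnorm_ge0 {R V}.
Arguments bl_comb {R V}. Arguments bl_scale {R V}. Arguments dnorm_scale {R V}.
Arguments dnorm_lip {R V}. Arguments norming {R V}. Arguments bl_zero {R V}.
Arguments gateaux_bound {R V}. Arguments gateaux_self {R V}. Arguments gateaux_attain {R V}.

Section P6.
Variables (R : realType) (V : normedModType R).

Lemma ord_cases {m} (j : 'I_m.+1) : j = ord_max \/ exists k : 'I_m, j = widen_ord (leqnSn m) k.
Proof.
case: (ltnP j m) => h; first by right; exists (Ordinal h); apply: val_inj.
by left; apply: val_inj => /=; have := ltn_ord j; rewrite ltnS => h2; apply/eqP; rewrite eqn_leq h2 h.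
Qed.

Definition extc {m} (c : 'I_m -> R) (l : R) (j : 'I_m.+1) : R :=
  oapp c l (insub (val j) : option 'I_m).

Lemma extc_widen m (c : 'I_m -> R) (l : R) (k : 'I_m) : extc c l (widen_ord (leqnSn m) k) = c k.
Proof. by rewrite /extc /= valK. Qed.

Lemma extc_max m (c : 'I_m -> R) (l : R) : extc c l (@ord_max m) = l.
Proof. by rewrite /extc /= insubF // ltnn. Qed.

Lemma sum_ext m (c : 'I_m -> R) l (F : 'I_m.+1 -> R) :
  \sum_(j < m.+1) extc c l j * F j =
  \sum_(j < m) c j * F (widen_ord (leqnSn m) j) + l * F ord_max.
Proof.
rewrite big_ord_recr /= extc_max; congr (_ + _).
by apply: eq_bigr => k _; rewrite extc_widen.
Qed.

Lemma span_ker m (nu : 'I_m -> V -> R) (mu : V -> R) :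
  (forall j, linf (nu j)) -> linf mu ->
  (forall f, (forall j, nu j f = 0) -> mu f = 0) ->
  exists c : 'I_m -> R, forall f, mu f = \sum_(j < m) c j * nu j f.
Proof.
elim: m nu mu => [|m IH] nu mu hn hm hk.
  by exists (fun=> 0) => f; rewrite big_ord0; apply: hk => -[].
pose nu' (k : 'I_m) := nu (widen_ord (leqnSn m) k).
pose nl := nu ord_max.
have hn' : forall k, linf (nu' k) by move=> k; exact: hn.
have allj : forall g, (forall k, nu' k g = 0) -> nl g = 0 -> forall j, nu j g = 0.
  move=> g h1 h2 j; have [e|[k e]] := ord_cases j; rewrite e //; exact: h1.
have [hA|hB] := pselect (forall f, (forall k, nu' k f = 0) -> nl f = 0).
  have [c' hc'] := IH nu' mu hn' hm (fun f h => hk f (allj f h (hA f h))).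
  exists (extc c' 0) => f; rewrite sum_ext mul0r addr0; exact: hc'.
move: hB => /existsNP [f0 /not_implyP [h0 h1]].
pose x0 := (nl f0)^-1 *: f0.
have nlx0 : nl x0 = 1 by rewrite /x0 linfZ ?mulVf //; [apply/eqP | exact: hn].
have nux0 : forall k, nu' k x0 = 0 by move=> k; rewrite /x0 linfZ // h0 mulr0.
pose mu' f := mu f - mu x0 * nl f.
have hm' : linf mu'.
  by move=> a f g; rewrite /mu' /nl hm (hn ord_max); ring.
have hk' : forall f, (forall k, nu' k f = 0) -> mu' f = 0.
  move=> f hf.
  have : mu (f - nl f *: x0) = 0.
    apply: hk; apply: allj.
      by move=> k; rewrite linfB // linfZ // hf nux0; ring.
    by have hl := hn ord_max; rewrite /nl (linfB _ _ _ hl) (linfZ _ _ _ hl) -/nl nlx0 mulr1 subrr.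
  by rewrite (linfB _ _ _ hm) (linfZ _ _ _ hm) /mu' => h; lra.
have [c' hc'] := IH nu' mu' hn' hm' hk'.
exists (extc c' (mu x0)) => f; rewrite sum_ext -hc' /mu' /nl; ring.
Qed.

Lemma bl_lincomb m (c : 'I_m -> R) (nu : 'I_m -> V -> R) :
  (forall j, bl (nu j)) -> bl (lincomb c nu).
Proof.
elim: m c nu => [|m IH] c nu hb.
  have -> : lincomb c nu = fun=> 0 by apply: funext => f; rewrite /lincomb big_ord0.
  by split; [move=> *; rewrite mulr0 addr0 | exists 0 => f; rewrite normr0 mul0r].
have -> : lincomb c nu = fun f => 1 * lincomb (fun k => c (widen_ord (leqnSn m) k))
    (fun k => nu (widen_ord (leqnSn m) k)) f + c ord_max * nu ord_max f.
  by apply: funext => f; rewrite /lincomb big_ord_recr mul1r.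
apply: bl_comb => //; exact: IH.
Qed.

End P6.
Arguments linf {R V}. Arguments sublin {R V}. Arguments infC {R V}.
Arguments infC_sublin {R V}. Arguments infC_le {R V}. Arguments infC_ge {R V}.
Arguments infC_le_q {R V}. Arguments infC_neg {R V}. Arguments hahn_banach {R V}.
Arguments bl {R V}. Arguments linf0 {R V}. Arguments linfZ {R V}.
Arguments linfD {R V}. Arguments linfB {R V}. Arguments bl_dual {R V}. Arguments dual_bl {R V}.
Arguments dnorm_ub {R V}. Arguments dnorm_le {R V}. Arguments dnorm_ge0 {R V}.
Arguments bl_comb {R V}. Arguments bl_scale {R V}. Arguments dnorm_scale {R V}.
Arguments dnorm_lip {R V}. Arguments norming {R V}. Arguments bl_zero {R V}.
Arguments gateaux_bound {R V}. Arguments gateaux_self {R V}. Arguments gateaux_attain {R V}.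
Arguments span_ker {R V}. Arguments bl_lincomb {R V}.

Theorem mainTheorem6 (R : realType) (B : completeNormedModType R) (m : nat)
  (nu : 'I_m -> B -> R) (y : 'I_m -> R) (fhat : B) :
  dual_smooth B ->
  (forall j, is_dual (nu j)) ->
  lin_indep nu ->
  is_min_norm_interp nu y fhat <->
  (interp_set nu y fhat /\
   exists c : 'I_m -> R,
     forall mu : B -> R, is_dual mu ->
       mu fhat = dnorm (lincomb c nu) * gateaux_dual (lincomb c nu) mu).
Proof.
move=> hs hd _.
have hb : forall j, bl (nu j) by move=> j; exact: dual_bl (hd j).
have hl : forall j, linf (nu j) by move=> j; exact: (hb j).1.
have hyp_lb : forall A : set B, has_lbound [set `|f| | f in A].
  by move=> A; exists 0 => _ [f _ <-].
split.
- move=> [hI hmin]; split => //.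
  pose C : set (B * R) := [set p | (forall j, nu j p.1 = 0) /\ p.2 = 0].
  have hq : sublin (fun f : B => `|f|).
    split; first by move=> ? ?; apply: ler_normD.
    by move=> a f a0; rewrite normrZ gtr0_norm.
  have C0 : C (0, 0) by split => // j; rewrite linf0.
  have CD : forall z1 s1 z2 s2, C (z1, s1) -> C (z2, s2) -> C (z1 + z2, s1 + s2).
    by move=> z1 s1 z2 s2 [h1 /= ->] [h2 /= ->]; split; rewrite ?addr0 // => j /=; rewrite linfD // h1 h2 addr0.
  have CZ : forall a z s, 0 < a -> C (z, s) -> C (a *: z, a * s).
    by move=> a z s _ [h /= ->]; split; rewrite ?mulr0 // => j /=; rewrite linfZ // h mulr0.
  have Cle : forall z s, C (z, s) -> s <= `|z|.
    by move=> z s [_ /= ->].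
  have hp := infC_sublin _ C hq C0 CD CZ Cle.
  set p := infC _ C in hp.
  have pf : p fhat = `|fhat|.
    apply/eqP; rewrite eq_le infC_le_q //=.
    apply: infC_ge => // z s [hz /= ->]; rewrite subr0 hmin.
    apply: ge_inf => //; exists (fhat + z) => //.
    by move=> j; rewrite linfD // hz addr0 hI.
  have [mu [hmu mup mux]] := hahn_banach p fhat hp.
  have mupn : forall f, mu f <= `|f|.
    by move=> f; apply: le_trans (mup f) (infC_le_q _ C hq C0 Cle f).
  have muN : forall f, mu (- f) = - mu f.
    by move=> f; rewrite -scaleN1r linfZ // mulN1r.
  have mun : forall f, `|mu f| <= `|f|.
    move=> f; rewrite ler_norml mupn andbT; have := mupn (- f); rewrite muN normrN; lra.
  have mub : bl mu by split => //; exists 1 => f; rewrite mul1r.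
  have muK : forall f, (forall j, nu j f = 0) -> mu f = 0.
    move=> f hf; apply/eqP; rewrite eq_le; apply/andP; split.
    - have : C (- f, 0) by split => //= j; rewrite -scaleN1r linfZ // hf mulr0.
      move=> /(infC_neg _ C hq Cle); rewrite opprK oppr0 => h; exact: le_trans (mup f) h.
    - have : C (f, 0) by split.
      move=> /(infC_neg _ C hq Cle); rewrite oppr0 => h.
      have := le_trans (mup (- f)) h; rewrite muN; lra.
  have [c hc] := span_ker m nu mu hl hmu muK.
  have mux' : mu fhat = `|fhat| by rewrite mux pf.
  exists (fun j => `|fhat| * c j) => mu0 hmu0.
  have hlc : lincomb (fun j => `|fhat| * c j) nu = (fun f => `|fhat| * mu f).
    apply: funext => f; rewrite /lincomb hc mulr_sumr; apply: eq_bigr => j _.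
    by rewrite mulrA.
  rewrite hlc.
  have hb0 := dual_bl mu0 hmu0.
  have [f0|fn0] := eqVneq fhat 0.
    rewrite f0 normr0 dnorm_scale // normr0 !mul0r linf0 //; exact: hb0.1.
  have nf : 0 < `|fhat| by rewrite normr_gt0.
  have dmu : dnorm mu = 1.
    apply/eqP; rewrite eq_le dnorm_le ?ler01 //=; last by move=> f; rewrite mul1r.
    have := dnorm_ub mu mub fhat; rewrite mux' normr_id => h.
    by rewrite -(ler_pM2r nf) mul1r.
  pose nuh := fun f => `|fhat| * mu f.
  have hbn : bl nuh by apply: bl_scale.
  have dn : dnorm nuh = `|fhat| by rewrite /nuh dnorm_scale // dmu normr_id mulr1.
  have n0 : nuh <> (fun=> 0).
    move=> /(congr1 (fun g => g fhat)) /=; rewrite /nuh mux' => /eqP.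
    rewrite mulf_eq0 orbb => /eqP h; rewrite h in nf; by rewrite ltxx in nf.
  have hx : nuh fhat = dnorm nuh * `|fhat| by rewrite dn /nuh mux'.
  have G := gateaux_attain nuh mu0 fhat hbn hb0 n0
    (hs nuh (bl_dual nuh hbn) n0 mu0 hmu0) nf hx.
  rewrite -/nuh dn G; field; rewrite gt_eqF //.
- move=> [hI [c hc]]; split => //.
  set nuc := lincomb c nu in hc *.
  have hbc : bl nuc := bl_lincomb m c nu hb.
  have rho0 : 0 <= dnorm nuc := dnorm_ge0 nuc hbc.
  have hcv : forall mu0, bl mu0 -> nuc <> (fun=> 0) -> cvg (dquot nuc mu0 @ (0:R)^').
    by move=> mu0 hm n0; exact: hs nuc (bl_dual nuc hbc) n0 mu0 (bl_dual mu0 hm).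
  have [mu1 [hb1 hn1 hx1]] := norming fhat.
  have le1 : `|fhat| <= dnorm nuc.
    rewrite -hx1 (hc mu1 (bl_dual mu1 hb1)).
    have gb := gateaux_bound nuc mu1 hbc hb1 (hcv mu1 hb1).
    have d1 : dnorm mu1 <= 1.
      by apply: dnorm_le => // f; rewrite mul1r.
    apply: le_trans (ler_norm _) _; rewrite normrM ger0_norm //.
    rewrite -{2}(mulr1 (dnorm nuc)) ler_wpM2l //; exact: le_trans gb d1.
  have nfh : nuc fhat = dnorm nuc * dnorm nuc.
    by rewrite (hc nuc (bl_dual nuc hbc)) gateaux_self.
  have key : forall f, interp_set nu y f -> `|fhat| <= `|f|.
    move=> f hf.
    have e : nuc f = nuc fhat.
      by rewrite /nuc /lincomb; apply: eq_bigr => j _; rewrite hf hI.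
    have h := dnorm_ub nuc hbc f.
    have h2 := ler_norm (nuc f).
    rewrite e nfh in h h2.
    have h3 : dnorm nuc * dnorm nuc <= dnorm nuc * `|f| := le_trans h2 h.
    have := normr_ge0 f.
    move: rho0; rewrite le_eqVlt => /orP[/eqP d0|dpos].
      by rewrite -d0 in le1; lra.
    by rewrite ler_pM2l // in h3; lra.
  apply/eqP; rewrite eq_le; apply/andP; split.
  + apply: lb_le_inf; first by exists `|fhat|; exists fhat.
    by move=> _ [f hf <-]; exact: key.
  + by apply: ge_inf => //; exists fhat.
Qed.
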